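(* Fix $\gamma\in\mathbb{R}$ and let $\theta^1,\theta^2\in[0,\infty)^{s_0}$ be such that $\Gamma_{\theta^1}^+\cap\Gamma_{\theta^2}^-=\emptyset$ or $\Gamma_{\theta^1}^-\cap\Gamma_{\theta^2}^+=\emptyset$, and let $c_1,c_2>0$. (i) If Condition 3.2 holds at $\gamma$ for $\theta^1$ and for $\theta^2$, then it holds at $\gamma$ for $c_1\theta^1+c_2\theta^2$. (ii) If the balance equation (B) holds for $\theta^1$ and for $\theta^2$, then (B) holds for $c_1\theta^1+c_2\theta^2$.
   Context: Fix integers $s_0,r_0\ge 1$ and, for $k=1,\dots,r_0$, vectors $\nu_k,\nu_k'\in\mathbb{N}^{s_0}$ (reactant and product vectors of reaction $k$); set $\zeta_k=\nu_k'-\nu_k$. Fix $\alpha\in[0,\infty)^{s_0}$ and $\beta\in\mathbb{R}^{r_0}$ and set $\rho_k=\beta_k+\nu_k\cdot\alpha$. For $\theta\in[0,\infty)^{s_0}$ let $\Gamma_\theta^+=\{k:\theta\cdot\zeta_k>0\}$, $\Gamma_\theta^-=\{k:\theta\cdot\zeta_k<0\}$ and $\mathrm{supp}(\theta)=\{i:\theta_i>0\}$. A maximum over the empty set is $-\infty$. For $\theta\in[0,\infty)^{s_0}$ and $\gamma\in\mathbb{R}$: the balance equation for $\theta$ is (B) $\max_{k\in\Gamma_\theta^-}\rho_k=\max_{k\in\Gamma_\theta^+}\rho_k$; the time-scale constraint for $\theta$ at $\gamma$ is (T) $\gamma\le\max_{i:\theta_i>0}\alpha_i-\max_{k\in\Gamma_\theta^+\cup\Gamma_\theta^-}\rho_k$;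 Condition 3.2 holds for $\theta$ at $\gamma$ if (B) or (T) holds. *)

(* Defs.v *)
(* the statement is purely order-theoretic over the reals,
   stated for an arbitrary real field R. *)
From HB Require Import structures.
From mathcomp Require Import all_boot all_order all_algebra.
Set Implicit Arguments. Unset Strict Implicit. Unset Printing Implicit Defensive.
Import Order.TTheory GRing.Theory Num.Theory.
Local Open Scope ring_scope.

Section CRN.
Variables (R : realFieldType) (s0 r0 : nat).
(* reactant / product vectors nu_k, nu'_k in N^{s0} *)
Variables (nu nu' : 'I_r0 -> 'I_s0 -> nat).
Variables (alpha : 'I_s0 -> R) (beta : 'I_r0 -> R).

Definition zeta (k : 'I_r0) (i : 'I_s0) : R := (nu' k i)%:R - (nu k i)%:R.
Definition rho (k : 'I_r0) : R := beta k + \sum_(i < s0) (nu k i)%:R * alpha i.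
Definition tz (theta : 'I_s0 -> R) (k : 'I_r0) : R :=
  \sum_(i < s0) theta i * zeta k i.

Definition Gplus (theta : 'I_s0 -> R) : {set 'I_r0} := [set k | 0 < tz theta k].
Definition Gminus (theta : 'I_s0 -> R) : {set 'I_r0} := [set k | tz theta k < 0].
Definition supp (theta : 'I_s0 -> R) : {set 'I_s0} := [set i | 0 < theta i].

End CRN.

(* Extended reals R ∪ {-oo}: None stands for -oo. *)
Definition emax (R : realFieldType) (x y : option R) : option R :=
  match x, y with
  | None, _ => y
  | _, None => x
  | Some a, Some b => Some (Num.max a b)
  end.

(* maximum of f over a finite set A; max over the empty set is -oo (None) *)
Definition setmax (R : realFieldType) (T : finType) (A : {set T}) (f : T -> R)
  : option R := \big[@emax R/None]_(t in A) Some (f t).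

Section Conds.
Variables (R : realFieldType) (s0 r0 : nat).
Variables (nu nu' : 'I_r0 -> 'I_s0 -> nat).
Variables (alpha : 'I_s0 -> R) (beta : 'I_r0 -> R).

Definition balance (theta : 'I_s0 -> R) : Prop :=
  setmax (Gminus nu nu' theta) (rho nu alpha beta)
  = setmax (Gplus nu nu' theta) (rho nu alpha beta).

(* (T) time-scale constraint:
   gamma <= max_{i in supp theta} alpha_i - max_{k in Gamma+ ∪ Gamma-} rho_k,
   with extended arithmetic: a - (-oo) = +oo, -oo - m = -oo for finite m,
   and the degenerate -oo - (-oo) read as +oo. *)
Definition timescale (theta : 'I_s0 -> R) (gamma : R) : Prop :=
  match setmax (supp theta) alpha,
        setmax (Gplus nu nu' theta :|: Gminus nu nu' theta) (rho nu alpha beta) with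
  | _, None => True
  | None, Some _ => False
  | Some a, Some m => gamma <= a - m
  end.

Definition cond32 (theta : 'I_s0 -> R) (gamma : R) : Prop :=
  balance theta \/ timescale theta gamma.

End Conds.

(* Main.v *)
Require Import Defs.
From HB Require Import structures.
From mathcomp Require Import all_boot all_order all_algebra.
Import Order.TTheory GRing.Theory Num.Theory.
Local Open Scope ring_scope.

Section Abs.
Variable R : realFieldType.

Definition ole (x y : option R) : bool :=
  match x, y with None, _ => true | Some _, None => false | Some a, Some b => a <= b end.

Lemma ole_refl x : ole x x.
Proof. by case: x => //= a. Qed.
Lemma ole_trans x y z : ole x y -> ole y z -> ole x z.
Proof. by case: x => [a|] //; case: y => [b|] //; case: z => [c|] //= ; apply: le_trans. Qed.
Lemma ole_total x y : ole x y || ole y x.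
Proof. by case: x => [a|] //; case: y => [b|] //=; apply: le_total. Qed.
Arguments ole_trans {x y z}.
Lemma ole_anti x y : ole x y -> ole y x -> x = y.
Proof.
case: x => [a|]; case: y => [b|] //= h1 h2.
by rewrite (@le_anti _ _ a b) ?h1 ?h2.
Qed.
Lemma ole_emax x y z : ole (emax x y) z = ole x z && ole y z.
Proof. by case: x => [a|]; case: y => [b|]; case: z => [c|] //=; rewrite ?andbT // ge_max. Qed.

Variable T : finType.

Lemma setmax_le (A : {set T}) (f : T -> R) x :
  (forall k, k \in A -> ole (Some (f k)) x) -> ole (setmax A f) x.
Proof.
move=> H; rewrite /setmax; apply: (big_rec (fun y => ole y x)) => // i y Hi Hy.
by rewrite ole_emax Hy H.
Qed.

Lemma le_setmax (A : {set T}) (f : T -> R) k :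
  k \in A -> ole (Some (f k)) (setmax A f).
Proof.
move=> kA; rewrite /setmax.
have : k \in index_enum T by rewrite mem_index_enum.
elim: (index_enum T) => [|a s IH] //=.
rewrite in_cons big_cons; case/orP => [/eqP <-|ks].
  rewrite kA; have := ole_refl (emax (Some (f k)) (\big[emax (R:=R)/None]_(j <- s | j \in A) Some (f j))).
  by rewrite ole_emax => /andP [].
case: ifP => _; last exact: IH.
have := ole_refl (emax (Some (f a)) (\big[emax (R:=R)/None]_(j <- s | j \in A) Some (f j))).
by rewrite ole_emax => /andP [_ h]; exact: ole_trans (IH ks) h.
Qed.

Arguments le_setmax {A} f {k}.
Lemma setmax_cases (A : {set T}) (f : T -> R) :
  setmax A f = None \/ exists2 k, k \in A & setmax A f = Some (f k).
Proof.
rewrite /setmax; apply: (big_rec (fun y => y = None \/ exists2 k, k \in A & y = Some (f k))); first by left.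
move=> i y Hi [->|[k kA ->]]; right; first by exists i.
rewrite /= maxEle; case: ifP => _; [by exists k | by exists i].
Qed.

Lemma setmax_sub (A B : {set T}) (f : T -> R) :
  (forall k, k \in A -> k \in B) -> ole (setmax A f) (setmax B f).
Proof. by move=> H; apply: setmax_le => k /H; apply: le_setmax. Qed.

Definition tsA (a m : option R) (g : R) : Prop :=
  match a, m with
  | _, None => True
  | None, Some _ => False
  | Some a, Some m => g <= a - m
  end.

Lemma tsA_mono a a' m m' g : tsA a m g -> ole a a' -> ole m' m -> tsA a' m' g.
Proof.
case: m' => [m'|] //; case: m => [m|] //; case: a => [a|] //; case: a' => [a'|] //=.
move=> h ha hm; apply: le_trans h _; exact: lerB.
Qed.

Lemma bal_A (rho : T -> R) (P1 N1 P2 N2 P N : {set T}) :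
  (forall k, k \in P -> k \in P1 \/ k \in P2) ->
  (forall k, k \in N -> k \in N1 \/ k \in N2) ->
  (forall k, k \in N2 -> k \in N) ->
  (forall k, k \in P1 -> k \in P) ->
  (forall k, k \in P2 -> k \notin N1 -> k \in P) ->
  (forall k, k \in N1 -> k \notin P2 -> k \in N) ->
  setmax N1 rho = setmax P1 rho -> setmax N2 rho = setmax P2 rho ->
  setmax N rho = setmax P rho.
Proof.
move=> hP hN hN2 hP1 hP2 hN1 e1 e2.
have m1N : ole (setmax N1 rho) (setmax N rho).
  case: (setmax_cases N1 rho) => [->//|[k kN1 ->]].
  case kP2: (k \in P2); last by apply: le_setmax; apply: hN1; rewrite ?kP2.
  apply: ole_trans (le_setmax rho kP2) _; rewrite -e2; exact: setmax_sub.
have m2P : ole (setmax P2 rho) (setmax P rho).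
  case: (setmax_cases P2 rho) => [->//|[k kP2 ->]].
  case kN1: (k \in N1); last by apply: le_setmax; apply: hP2; rewrite ?kN1.
  apply: ole_trans (le_setmax rho kN1) _; rewrite e1; exact: setmax_sub.
apply: ole_anti.
  apply: setmax_le => k /hN [] h.
    by apply: ole_trans (le_setmax rho h) _; rewrite e1; apply: setmax_sub.
  by apply: ole_trans (le_setmax rho h) _; rewrite e2.
apply: setmax_le => k /hP [] h.
  by apply: ole_trans (le_setmax rho h) _; rewrite -e1.
by apply: ole_trans (le_setmax rho h) _; rewrite -e2; apply: setmax_sub.
Qed.

Lemma setmax_U (A B : {set T}) (f : T -> R) x :
  ole (setmax A f) x -> ole (setmax B f) x -> ole (setmax (A :|: B) f) x.
Proof.
move=> hA hB; apply: setmax_le => k; rewrite inE => /orP [] h.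
  exact: ole_trans (le_setmax f h) hA.
exact: ole_trans (le_setmax f h) hB.
Qed.

Lemma halfB (rho : T -> R) (P1 N1 P2 N2 P N : {set T}) :
  (forall k, k \in P -> k \in P1 \/ k \in P2) ->
  (forall k, k \in N -> k \in N1 \/ k \in N2) ->
  (forall k, k \in P2 -> k \notin P1 :|: N1 -> k \in P) ->
  (forall k, k \in N2 -> k \notin P1 :|: N1 -> k \in N) ->
  setmax N2 rho = setmax P2 rho ->
  ~~ ole (setmax (P2 :|: N2) rho) (setmax (P1 :|: N1) rho) ->
  setmax N rho = setmax P rho.
Proof.
move=> hP hN hP2 hN2 e2 nle.
set m1 := setmax (P1 :|: N1) rho.
have m2M : ole (setmax (P2 :|: N2) rho) (setmax P2 rho).
  by apply: setmax_U; rewrite ?ole_refl // e2 ole_refl.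
have m1M : ole m1 (setmax P2 rho).
  apply: ole_trans m2M; by have := ole_total m1 (setmax (P2 :|: N2) rho); rewrite (negbTE nle) orbF.
have key : forall S Q : {set T}, (forall k, k \in S -> k \notin P1 :|: N1 -> k \in Q) ->
   setmax S rho = setmax P2 rho -> ole (setmax P2 rho) (setmax Q rho).
  move=> S Q hS eS; rewrite -eS.
  case: (setmax_cases S rho) => [->//|[k kS ek]]; rewrite ek.
  case kU: (k \in P1 :|: N1); last by apply: le_setmax; apply: hS; rewrite ?kU.
  have hk : ole (setmax P2 rho) m1 by rewrite -eS ek; apply: le_setmax.
  have := ole_trans m2M hk.
  by rewrite (negbTE nle).
have eP2 : forall k, k \in P2 -> k \in P2 by [].
apply: ole_anti.
  apply: ole_trans (key P2 P hP2 erefl); apply: setmax_le => k /hN [] h.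
    have hk : k \in P1 :|: N1 by rewrite inE h ?orbT.
    exact: ole_trans (le_setmax rho hk) m1M.
  by rewrite -e2; apply: le_setmax.
apply: ole_trans (key N2 N hN2 e2); apply: setmax_le => k /hP [] h.
  have hk : k \in P1 :|: N1 by rewrite inE h ?orbT.
  exact: ole_trans (le_setmax rho hk) m1M.
by apply: le_setmax.
Qed.
End Abs.
Section Sg.
Variables (R : realFieldType) (c1 c2 : R) (hc1 : 0 < c1) (hc2 : 0 < c2).
Lemma xpp (x y : R) : 0 < x -> 0 <= y -> 0 < x + y.
Proof. by move=> hx hy; apply: lt_le_trans hx _; rewrite lerDl. Qed.
Lemma xnn (x y : R) : x < 0 -> y <= 0 -> x + y < 0.
Proof. by move=> hx hy; apply: le_lt_trans _ hx; rewrite gerDl. Qed.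
Lemma sP a b : 0 < c1 * a + c2 * b -> 0 < a \/ 0 < b.
Proof.
move=> h; case: (ltP 0 a) => ha; first by left.
case: (ltP 0 b) => hb; first by right.
have ha' : c1 * a <= 0 by rewrite pmulr_rle0.
have hb' : c2 * b <= 0 by rewrite pmulr_rle0.
have := lerD ha' hb'; rewrite addr0 leNgt h //.
Qed.
Lemma sN a b : c1 * a + c2 * b < 0 -> a < 0 \/ b < 0.
Proof.
move=> h; case: (ltP a 0) => ha; first by left.
case: (ltP b 0) => hb; first by right.
have ha' : 0 <= c1 * a by rewrite pmulr_rge0.
have hb' : 0 <= c2 * b by rewrite pmulr_rge0.
have := lerD ha' hb'; rewrite addr0 leNgt h //.
Qed.
Lemma sPP a b : 0 < a -> 0 <= b -> 0 < c1 * a + c2 * b.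
Proof. by move=> ha hb; apply: xpp; rewrite ?pmulr_rgt0 ?pmulr_rge0. Qed.
Lemma sPP' a b : 0 <= a -> 0 < b -> 0 < c1 * a + c2 * b.
Proof. by move=> ha hb; rewrite addrC; apply: xpp; rewrite ?pmulr_rgt0 ?pmulr_rge0. Qed.
Lemma sNN a b : a < 0 -> b <= 0 -> c1 * a + c2 * b < 0.
Proof. by move=> ha hb; apply: xnn; rewrite ?pmulr_rlt0 ?pmulr_rle0. Qed.
Lemma sNN' a b : a <= 0 -> b < 0 -> c1 * a + c2 * b < 0.
Proof. by move=> ha hb; rewrite addrC; apply: xnn; rewrite ?pmulr_rlt0 ?pmulr_rle0. Qed.
Lemma nlt0 (a : R) : ~~ (0 < a) -> a <= 0.
Proof. by rewrite leNgt. Qed.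
Lemma ngt0 (a : R) : ~~ (a < 0) -> 0 <= a.
Proof. by rewrite leNgt. Qed.
End Sg.

Arguments ole {R}.
Arguments ole_total {R}.
Arguments tsA {R}.
Arguments bal_A {R T rho P1 N1 P2 N2 P N}.
Arguments halfB {R T rho P1 N1 P2 N2 P N}.
Arguments tsA_mono {R a a' m m' g}.

Theorem lemma3p8 (R : realFieldType) (s0 r0 : nat)
  (hs0 : (0 < s0)%N) (hr0 : (0 < r0)%N)
  (nu nu' : 'I_r0 -> 'I_s0 -> nat)
  (alpha : 'I_s0 -> R) (halpha : forall i, 0 <= alpha i)
  (beta : 'I_r0 -> R)
  (gamma : R) (theta1 theta2 : 'I_s0 -> R)
  (h1 : forall i, 0 <= theta1 i) (h2 : forall i, 0 <= theta2 i)
  (hG : Gplus nu nu' theta1 :&: Gminus nu nu' theta2 = set0 \/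
        Gminus nu nu' theta1 :&: Gplus nu nu' theta2 = set0)
  (c1 c2 : R) (hc1 : 0 < c1) (hc2 : 0 < c2) :
  let theta := fun i => c1 * theta1 i + c2 * theta2 i in
  (cond32 nu nu' alpha beta theta1 gamma ->
   cond32 nu nu' alpha beta theta2 gamma ->
   cond32 nu nu' alpha beta theta gamma)
  /\
  (balance nu nu' alpha beta theta1 ->
   balance nu nu' alpha beta theta2 ->
   balance nu nu' alpha beta theta).
Proof.
move=> theta.
have tzE : forall k, tz nu nu' theta k = c1 * tz nu nu' theta1 k + c2 * tz nu nu' theta2 k.
  move=> k; rewrite /tz !mulr_sumr -big_split /=; apply: eq_bigr => i _.
  by rewrite /theta mulrDl !mulrA.
have memP : forall (th : 'I_s0 -> R) k, (k \in Gplus nu nu' th) = (0 < tz nu nu' th k) by move=> th k; rewrite /Gplus in_set.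
have memN : forall (th : 'I_s0 -> R) k, (k \in Gminus nu nu' th) = (tz nu nu' th k < 0) by move=> th k; rewrite /Gminus in_set.
set P1 := Gplus nu nu' theta1; set N1 := Gminus nu nu' theta1.
set P2 := Gplus nu nu' theta2; set N2 := Gminus nu nu' theta2.
set P := Gplus nu nu' theta; set N := Gminus nu nu' theta.
set rh := rho nu alpha beta.
have hP : forall k, k \in P -> k \in P1 \/ k \in P2.
  by move=> k; rewrite !memP tzE; apply: (sP _ _ _ hc1 hc2).
have hN : forall k, k \in N -> k \in N1 \/ k \in N2.
  by move=> k; rewrite !memN tzE; apply: (sN _ _ _ hc1 hc2).
have hP' : forall k, k \in P -> k \in P2 \/ k \in P1.
  by move=> k /hP [] ?; [right|left].
have hN' : forall k, k \in N -> k \in N2 \/ k \in N1.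
  by move=> k /hN [] ?; [right|left].
have z1P : forall k, k \in P2 -> k \notin P1 :|: N1 -> k \in P.
  move=> k; rewrite in_setU negb_or !memP memN tzE => hb /andP [ha1 ha2].
  by apply: (sPP' _ _ _ hc1 hc2) => //; apply: ngt0.
have z1N : forall k, k \in N2 -> k \notin P1 :|: N1 -> k \in N.
  move=> k; rewrite in_setU negb_or !memN memP tzE => hb /andP [ha1 ha2].
  by apply: (sNN' _ _ _ hc1 hc2) => //; apply: nlt0.
have z2P : forall k, k \in P1 -> k \notin P2 :|: N2 -> k \in P.
  move=> k; rewrite in_setU negb_or !memP memN tzE => hb /andP [ha1 ha2].
  by apply: (sPP _ _ _ hc1 hc2) => //; apply: ngt0.
have z2N : forall k, k \in N1 -> k \notin P2 :|: N2 -> k \in N.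
  move=> k; rewrite in_setU negb_or !memN memP tzE => hb /andP [ha1 ha2].
  by apply: (sNN _ _ _ hc1 hc2) => //; apply: nlt0.
have bal : balance nu nu' alpha beta theta1 -> balance nu nu' alpha beta theta2 ->
           balance nu nu' alpha beta theta.
  rewrite /balance -/P1 -/P2 -/N1 -/N2 -/P -/N -/rh => B1 B2.
  case: hG => hA.
    have nA : forall k, k \in P1 -> k \in N2 -> False.
      by move=> k a b; have := in_set0 k; rewrite -hA inE a b.
    apply: (bal_A hP hN) B1 B2.
    - move=> k kN2; rewrite memN tzE; apply: (sNN' _ _ _ hc1 hc2); last by rewrite -memN.
      by apply: nlt0; apply/negP => a; apply: (nA k); rewrite ?memP.
    - move=> k kP1; rewrite memP tzE; apply: (sPP _ _ _ hc1 hc2); first by rewrite -memP.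
      by apply: ngt0; apply/negP => b; apply: (nA k); rewrite ?memN.
    - move=> k; rewrite !memP memN tzE => hb ha; apply: (sPP' _ _ _ hc1 hc2) => //; exact: ngt0.
    - move=> k; rewrite !memN memP tzE => ha hb; apply: (sNN _ _ _ hc1 hc2) => //; exact: nlt0.
  have nA : forall k, k \in N1 -> k \in P2 -> False.
    by move=> k a b; have := in_set0 k; rewrite -hA inE a b.
  apply: (bal_A hP' hN') B2 B1.
  - move=> k kN1; rewrite memN tzE; apply: (sNN _ _ _ hc1 hc2); first by rewrite -memN.
    by apply: nlt0; apply/negP => a; apply: (nA k); rewrite ?memP.
  - move=> k kP2; rewrite memP tzE; apply: (sPP' _ _ _ hc1 hc2); last by rewrite -memP.
    by apply: ngt0; apply/negP => b; apply: (nA k); rewrite ?memN.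
  - move=> k; rewrite !memP memN tzE => hb ha; apply: (sPP _ _ _ hc1 hc2) => //; exact: ngt0.
  - move=> k; rewrite !memN memP tzE => ha hb; apply: (sNN' _ _ _ hc1 hc2) => //; exact: nlt0.
split; last exact: bal.
have sS : forall (th : 'I_s0 -> R) i, (i \in supp th) = (0 < th i) by move=> th i; rewrite /supp inE.
have S1 : ole (setmax (supp theta1) alpha) (setmax (supp theta) alpha).
  by apply: setmax_sub => i; rewrite !sS => h; apply: (sPP _ _ _ hc1 hc2).
have S2 : ole (setmax (supp theta2) alpha) (setmax (supp theta) alpha).
  by apply: setmax_sub => i; rewrite !sS => h; apply: (sPP' _ _ _ hc1 hc2).
set m1 := setmax (P1 :|: N1) rh; set m2 := setmax (P2 :|: N2) rh.
have mle : forall x, ole m1 x -> ole m2 x -> ole (setmax (P :|: N) rh) x.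
  move=> x h1' h2'; apply: setmax_le => k; rewrite inE => /orP [/hP|/hN] [] h.
  - by apply: ole_trans h1'; apply: le_setmax; rewrite inE h.
  - by apply: ole_trans h2'; apply: le_setmax; rewrite inE h.
  - by apply: ole_trans h1'; apply: le_setmax; rewrite inE h orbT.
  - by apply: ole_trans h2'; apply: le_setmax; rewrite inE h orbT.
have T1g : timescale nu nu' alpha beta theta1 gamma -> ole m2 m1 ->
           timescale nu nu' alpha beta theta gamma.
  move=> T1 le21; change (tsA (setmax (supp theta) alpha) (setmax (P :|: N) rh) gamma).
  apply: (tsA_mono T1 S1); apply: mle => //; exact: ole_refl.
have T2g : timescale nu nu' alpha beta theta2 gamma -> ole m1 m2 ->
           timescale nu nu' alpha beta theta gamma.
  move=> T2 le12; change (tsA (setmax (supp theta) alpha) (setmax (P :|: N) rh) gamma).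
  apply: (tsA_mono T2 S2); apply: mle => //; exact: ole_refl.
rewrite /cond32 => [[B1|T1] [B2|T2]].
- by left; apply: bal.
- case: (boolP (ole m1 m2)) => h; first by right; apply: T2g.
  by left; apply: (halfB hP' hN' z2P z2N B1 h).
- case: (boolP (ole m2 m1)) => h; first by right; apply: T1g.
  by left; apply: (halfB hP hN z1P z1N B2 h).
- case/orP: (ole_total m1 m2) => h; first by right; apply: T2g.
  by right; apply: T1g.
Qed.
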